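(* Let $\mathfrak g$ be a nonsemisimple complex Lie algebra, $\mathfrak p$ a solvable nonperfect ideal of $\mathfrak g$, and $V$ an irreducible $\mathfrak g$-module. Then the following are equivalent: (1) $V$ is a locally finite $\mathfrak p$-module (every $v\in V$ lies in a finite-dimensional $\mathfrak p$-submodule); (2) $V$ is a quasi-Whittaker module for $\mathfrak g$, i.e., there exist a Lie algebra homomorphism $\phi:\mathfrak p\to\mathbb C$ and a vector $v\in V$ with $pv=\phi(p)v$ for all $p\in\mathfrak p$ that generates $V$ as a $\mathfrak g$-module.
   Context: A Lie algebra homomorphism $\phi:\mathfrak p\to\mathbb C$ is a linear map vanishing on $[\mathfrak p,\mathfrak p]$. A vector $v$ with $pv=\phi(p)v$ for all $p\in\mathfrak p$ is called a quasi-Whittaker vector of type $\phi$, and a module generated by such a vector a quasi-Whittaker module of type $\phi$. *)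

(* Defs.v *)
From HB Require Import structures.
From mathcomp Require Import all_boot all_order all_algebra.
From mathcomp Require Import complex Rstruct.
Set Implicit Arguments. Unset Strict Implicit. Unset Printing Implicit Defensive.
Import Order.TTheory GRing.Theory Num.Theory.
Local Open Scope ring_scope.

Definition CC : fieldType := (Rdefinitions.R)[i].

Section Lie.
Variable g : vectType CC.
Variable br : g -> g -> g.

Definition is_lie_bracket : Prop :=
  [/\ (forall (a : CC) x y z, br (a *: x + y) z = a *: br x z + br y z),
      (forall (a : CC) x y z, br z (a *: x + y) = a *: br z x + br z y),
      (forall x, br x x = 0) &
      (forall x y z, br x (br y z) + br y (br z x) + br z (br x y) = 0)].

(* [U, U]: the subspace spanned by all brackets of elements of U
   (equivalently, of basis elements of U, by bilinearity). *)
Definition derived (U : {vspace g}) : {vspace g} :=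
  <<[seq br x y | x <- vbasis U, y <- vbasis U]>>%VS.

Definition lie_subalgebra (U : {vspace g}) : Prop :=
  forall x y, x \in U -> y \in U -> br x y \in U.

Definition lie_ideal (U : {vspace g}) : Prop :=
  forall x y, y \in U -> br x y \in U.

Definition lie_solvable (U : {vspace g}) : Prop :=
  exists n, iter n derived U = 0%VS.

Definition lie_perfect (U : {vspace g}) : Prop := derived U = U.

Definition lie_semisimple : Prop :=
  forall U : {vspace g}, lie_ideal U -> lie_solvable U -> U = 0%VS.

Definition lie_hom_to_C (p : {vspace g}) (phi : g -> CC) : Prop :=
  (forall (a : CC) x y, x \in p -> y \in p -> phi (a *: x + y) = a * phi x + phi y)
  /\ (forall x, x \in derived p -> phi x = 0).

Variable V : lmodType CC.
Variable act : g -> V -> V.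

Definition is_lie_module : Prop :=
  [/\ (forall (a : CC) x y v, act (a *: x + y) v = a *: act x v + act y v),
      (forall (a : CC) x v w, act x (a *: v + w) = a *: act x v + act x w) &
      (forall x y v, act (br x y) v = act x (act y v) - act y (act x v))].

Definition submodule (S : V -> Prop) : Prop :=
  [/\ S 0,
      (forall (a : CC) v w, S v -> S w -> S (a *: v + w)) &
      (forall x v, S v -> S (act x v))].

Definition irreducible_module : Prop :=
  (exists v : V, v != 0) /\
  forall S, submodule S -> (forall v, S v -> v = 0) \/ (forall v, S v).

Definition in_span (s : seq V) (w : V) : Prop :=
  exists c : 'I_(size s) -> CC, w = \sum_(i < size s) c i *: s`_i.

(* V is a locally finite p-module: each v lies in a finite-dimensional
   p-submodule (the span of some finite family, stable under p). *)
Definition locally_finite (p : {vspace g}) : Prop :=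
  forall v : V, exists s : seq V,
    in_span s v /\ (forall x w, x \in p -> in_span s w -> in_span s (act x w)).

Definition generates (v : V) : Prop :=
  forall S, submodule S -> S v -> forall w, S w.

Definition quasi_whittaker (p : {vspace g}) : Prop :=
  exists phi : g -> CC, lie_hom_to_C p phi /\
  exists v : V, (forall x, x \in p -> act x v = phi x *: v) /\ generates v.

End Lie.

(* Main.v *)
Require Import Defs.
From HB Require Import structures.
From mathcomp Require Import all_boot all_order all_algebra.
From mathcomp Require Import complex Rstruct.
From Stdlib Require Import IndefiniteDescription Classical.
Set Implicit Arguments. Unset Strict Implicit. Unset Printing Implicit Defensive.
Import Order.TTheory GRing.Theory Num.Theory.
Local Open Scope ring_scope.

Lemma idem0 (V : zmodType) (x : V) : x = x + x -> x = 0.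
Proof. by rewrite -{1}[x]addr0 => /addrI ->. Qed.

Section LieG.
Variable g : vectType CC.
Variable br : g -> g -> g.
Hypothesis Hbr : is_lie_bracket br.

Lemma br0l z : br 0 z = 0.
Proof.
case: Hbr => H1 _ _ _; have := H1 1 0 0 z; rewrite !scale1r addr0.
exact: idem0.
Qed.
Lemma br0r z : br z 0 = 0.
Proof.
case: Hbr => _ H1 _ _; have := H1 1 0 0 z; rewrite !scale1r addr0.
exact: idem0.
Qed.
Lemma br_suml m (a : 'I_m -> CC) (u : 'I_m -> g) z :
  br (\sum_(i < m) a i *: u i) z = \sum_(i < m) a i *: br (u i) z.
Proof.
case: Hbr => H1 _ _ _.
elim: m a u => [|m IH] a u; first by rewrite !big_ord0 br0l.
by rewrite !big_ord_recl H1 IH.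
Qed.
Lemma br_sumr m (a : 'I_m -> CC) (u : 'I_m -> g) z :
  br z (\sum_(i < m) a i *: u i) = \sum_(i < m) a i *: br z (u i).
Proof.
case: Hbr => _ H1 _ _.
elim: m a u => [|m IH] a u; first by rewrite !big_ord0 br0r.
by rewrite !big_ord_recl H1 IH.
Qed.

Lemma br_derived (U : {vspace g}) x y : x \in U -> y \in U -> br x y \in derived br U.
Proof.
move=> xU yU; rewrite (coord_vbasis xU) (coord_vbasis yU) br_suml.
apply: memv_suml => i _; apply: memvZ; rewrite br_sumr.
apply: memv_suml => j _; apply: memvZ; apply: memv_span.
by apply: allpairs_f; apply: mem_nth; rewrite size_tuple.
Qed.

Lemma derived_sub (U : {vspace g}) : lie_subalgebra br U -> (derived br U <= U)%VS.
Proof.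
move=> HU; apply/span_subvP => z /allpairsP [[x y] [/= xU yU ->]].
by apply: HU; apply: vbasis_mem.
Qed.

Lemma derived_mono (U U' : {vspace g}) : (U <= U')%VS -> (derived br U <= derived br U')%VS.
Proof.
move=> HU; apply/span_subvP => z /allpairsP [[x y] [/= xU yU ->]].
by apply: br_derived; apply: (subvP HU); apply: vbasis_mem.
Qed.

Lemma iter_derived_mono n (U U' : {vspace g}) : (U <= U')%VS ->
  (iter n (derived br) U <= iter n (derived br) U')%VS.
Proof. by elim: n => //= n IH H; apply: derived_mono; apply: IH. Qed.

Lemma solvable_sub (U U' : {vspace g}) : (U <= U')%VS -> lie_solvable br U' -> lie_solvable br U.
Proof.
move=> HU [n Hn]; exists n; apply/eqP; rewrite -subv0 -Hn.
exact: iter_derived_mono.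
Qed.

End LieG.

Section Mx.
Variable n : nat.
Implicit Types (W U : 'M[CC]_n) (X : 'M[CC]_n).


Lemma eigen_in W X : W != 0 -> (W *m X <= W)%MS ->
  exists2 w : 'rV[CC]_n, w != 0 & (w <= W)%MS /\ exists a, w *m X = a *: w.
Proof.
move=> W0 WX.
set B := row_base W.
have BX : (B *m X <= B)%MS.
  rewrite (eq_row_base W); apply: submx_trans WX.
  by apply: submxMr; rewrite (eq_row_base W).
set X' := B *m X *m pinvmx B.
have X'B : X' *m B = B *m X by rewrite mulmxKpV.
have [a ra] : exists a, root (char_poly X') a.
  apply/closed_rootP; rewrite size_char_poly eqSS.
  by rewrite mxrank_eq0.
move: ra; rewrite -eigenvalue_root_char => /eigenvalueP [v vX v0].
exists (v *m B).
  apply: contra v0 => /eqP vB0; apply/eqP.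
  apply: (row_free_inj (row_base_free W)); by rewrite vB0 mul0mx.
split; first by rewrite -(eq_row_base W); apply: submxMl.
by exists a; rewrite -mulmxA -X'B mulmxA vX scalemxAl.
Qed.
End Mx.

Lemma prod_nseq0 (F : closedFieldType) k : \prod_(z <- nseq k (0 : F)) ('X - z%:P) = 'X^k.
Proof.
elim: k => [|k IH]; first by rewrite big_nil expr0.
by rewrite /= big_cons IH subr0 exprS.
Qed.

Lemma nil_trace (F : closedFieldType) r (N : 'M[F]_r) d :
  (forall v : 'rV_r, iter d (fun u => u *m N) v = 0) -> \tr N = 0.
Proof.
move=> HN.
case: r N HN => [|r] N HN; first by rewrite /mxtrace big_ord0.
have: (char_poly N)`_r = - \tr N by rewrite -(char_poly_trace N).
have [rs Hrs] := closed_field_poly_normal (char_poly N).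
have rs0 : all (pred1 0) rs.
  apply/allP => z zrs /=.
  have : root (char_poly N) z by rewrite Hrs rootZ ?root_prod_XsubC //
     (monicP (char_poly_monic N)) oner_eq0.
  rewrite -eigenvalue_root_char => /eigenvalueP [v vN v0].
  have : iter d (fun u => u *m N) v = z ^+ d *: v.
    elim: d {HN} => [|d IH]; first by rewrite scale1r.
    by rewrite /= IH -scalemxAl vN scalerA exprS mulrC.
  rewrite HN => /esym /eqP; rewrite scaler_eq0 (negbTE v0) orbF expf_eq0.
  by case/andP.
move/all_pred1P: rs0 Hrs => -> .
rewrite (monicP (char_poly_monic N)) scale1r prod_nseq0 => Hcp.
have := congr1 (fun q : {poly F} => size q) Hcp; rewrite size_char_poly size_polyXn => [[Hsz]].
have := congr1 (fun q : {poly F} => q`_r) Hcp; rewrite /= coefXn -Hsz eqn_leq ltnn /= => ->.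
by rewrite andbF => /esym /eqP; rewrite oppr_eq0 => /eqP.
Qed.

Section Rep.
Variables (g : vectType CC) (br : g -> g -> g) (n : nat) (rho : g -> 'M[CC]_n).
Variable p : {vspace g}.
Hypothesis rho_lin : forall (a : CC) x y, x \in p -> y \in p ->
  rho (a *: x + y) = a *: rho x + rho y.
Hypothesis rho_br : forall x y, x \in p -> y \in p ->
  rho (br x y) = rho y *m rho x - rho x *m rho y.

Lemma rho0 : rho 0 = 0.
Proof. have := rho_lin 1 (mem0v p) (mem0v p); rewrite addr0 !scale1r; exact: idem0. Qed.

Section Krylov.
Variables (h : {vspace g}) (x : g) (lam : g -> CC) (w : 'rV[CC]_n).
Hypotheses (hp : (h <= p)%VS) (xp : x \in p) (hx : forall y, y \in h -> br y x \in h).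
Hypotheses (w0 : w != 0) (wlam : forall y, y \in h -> w *m rho y = lam y *: w).

Let X := rho x.
Let u i := iter i (fun v => v *m X) w.
Let S i := (\sum_(j < i) <<u j>>)%MS.

Let S_rec i : S i.+1 = (S i + <<u i>>)%MS.
Proof. by rewrite /S big_ord_recr. Qed.

Let S0 : S 0 = 0.
Proof. by rewrite /S big_ord0. Qed.

Let u_S i : (u i <= S i.+1)%MS.
Proof. by rewrite S_rec; apply: submx_trans (addsmxSr _ _); rewrite genmxE. Qed.

Let S_step i : (S i <= S i.+1)%MS.
Proof. by rewrite S_rec addsmxSl. Qed.

Let S_mono i j : (i <= j)%N -> (S i <= S j)%MS.
Proof.
move=> /subnK <-; elim: (j - i)%N => [|k IH] //.
by apply: submx_trans IH _; rewrite addSn S_step.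
Qed.

Let S_X i : (S i *m X <= S i.+1)%MS.
Proof.
elim: i => [|i IH]; first by rewrite S0 mul0mx sub0mx.
rewrite S_rec addsmxMr addsmx_sub; apply/andP; split.
  by apply: submx_trans IH _; apply: S_step.
by rewrite (eqmxMr _ (genmxE _)); apply: (u_S i.+1).
Qed.

Let yp y : y \in h -> y \in p.
Proof. by move=> yh; apply: (subvP hp). Qed.

Let tri i : forall y, y \in h -> (u i *m rho y - lam y *: u i <= S i)%MS.
Proof.
elim: i => [|i IH] y yh.
  by rewrite /= wlam // subrr sub0mx.
have zh := hx yh.
have -> : u i.+1 *m rho y - lam y *: u i.+1 =
   (u i *m rho (br y x) - lam (br y x) *: u i) + lam (br y x) *: u i
   + (u i *m rho y - lam y *: u i) *m X.
  rewrite /= (rho_br (yp yh) xp) subrK mulmxBr mulmxBl !mulmxA -scalemxAl /X.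
  by rewrite addrA subrK.
rewrite -/(u i.+1).
apply: addmx_sub; first apply: addmx_sub.
- by apply: submx_trans (IH _ zh) (S_step _).
- by apply: scalemx_sub; apply: u_S.
- by apply: submx_trans (submxMr _ (IH _ yh)) (S_X _).
Qed.

Let step_sub i v c : (v - c *: u i <= S i)%MS -> (v <= S i.+1)%MS.
Proof.
move=> H; rewrite -(subrK (c *: u i) v); apply: addmx_sub.
  exact: submx_trans H (S_step _).
by apply: scalemx_sub; apply: u_S.
Qed.

Let S_h i y : y \in h -> (S i *m rho y <= S i)%MS.
Proof.
move=> yh; rewrite /S sumsmxMr; apply/sumsmx_subP => j _.
rewrite (eqmxMr _ (genmxE _)); apply: submx_trans (S_mono (ltn_ord j)).
by apply: (step_sub (c := lam y)); apply: tri.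
Qed.

Let S_N i z : z \in h -> (S i.+1 *m (rho z - (lam z)%:M) <= S i)%MS.
Proof.
move=> zh; rewrite /S sumsmxMr; apply/sumsmx_subP => j _.
rewrite (eqmxMr _ (genmxE _)); apply: submx_trans (S_mono (ltn_ord j : (j <= i)%N)).
by rewrite mulmxBr mul_mx_scalar; apply: tri.
Qed.

Let rk i : (forall j, (j < i)%N -> ~~ (u j <= S j)%MS) -> (i <= \rank (S i))%N.
Proof.
elim: i => [|i IH] H //.
have IH' := IH (fun j ji => H j (ltnW ji)).
apply: leq_ltn_trans IH' _.
have [le E] := mxrank_leqif_sup (S_step i).
rewrite ltn_neqAle le andbT E S_rec addsmx_sub submx_refl /= genmxE.
exact: H.
Qed.

Let exd : exists d, (u d <= S d)%MS.
Proof.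
have : [exists j : 'I_n.+1, (u j <= S j)%MS].
  apply: contraT => /existsPn H.
  have := rk (i := n.+1) (fun j jn => H (Ordinal jn)).
  by rewrite ltnNge rank_leq_col.
by case/existsP => j Hj; exists j.
Qed.

Lemma weight_br y : y \in h -> lam (br y x) = 0.
Proof.
move=> yh; have zh := hx yh; set z := br y x.
have [d Hd] := exd.
set U := S d.
have d0 : (0 < d)%N.
  case: d Hd {U} => // /=; rewrite S0 submx0 => /eqP w00.
  by move: w0; rewrite w00 eqxx.
have wU : (w <= U)%MS by apply: submx_trans (u_S 0) (S_mono d0).
have UX : (U *m X <= U)%MS.
  apply: submx_trans (S_X d) _; rewrite S_rec addsmx_sub submx_refl /= genmxE.
  exact: Hd.
have Uh y' : y' \in h -> (U *m rho y' <= U)%MS by move=> y'h; apply: S_h.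
have [r [B [BU Bfree]]] : exists r, exists B : 'M[CC]_(r, n), (B :=: U)%MS /\ row_free B.
  by exists (\rank U), (row_base U); split; [apply: eq_row_base | apply: row_base_free].
have ex M : (U *m M <= U)%MS -> exists A : 'M_r, A *m B = B *m M.
  move=> HM; exists (B *m M *m pinvmx B); rewrite mulmxKpV //; rewrite BU.
  by apply: submx_trans HM; apply: submxMr; rewrite BU.
have [X' HX'] := ex _ UX.
have [Y' HY'] := ex _ (Uh _ yh).
have [Z' HZ'] := ex _ (Uh _ zh).
set N := rho z - (lam z)%:M.
have UN : (U *m N <= U)%MS.
  rewrite mulmxBr mul_mx_scalar; apply: addmx_sub; first exact: Uh.
  by rewrite eqmx_opp; apply: scalemx_sub.
have [N' HN'] := ex _ UN.
have Zc : Z' = X' *m Y' - Y' *m X'.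
  apply: (row_free_inj Bfree) => /=.
  rewrite HZ' mulmxBl -[X' *m Y' *m B]mulmxA HY' [X' *m (B *m _)]mulmxA HX'.
  rewrite -[Y' *m X' *m B]mulmxA HX' [Y' *m (B *m _)]mulmxA HY'.
  by rewrite /z (rho_br (yp yh) xp) /X mulmxBr !mulmxA.
have NK : N' = Z' - lam z *: 1%:M.
  apply: (row_free_inj Bfree) => /=.
  by rewrite HN' mulmxBl HZ' scalemx1 mul_scalar_mx /N mulmxBr mul_mx_scalar.
have iterN k v : (v <= U)%MS -> (iter k (fun v => v *m N) v <= S (d - k))%MS.
  move=> vU; elim: k => [|k IHk]; first by rewrite subn0.
  rewrite subnS /=; move: IHk; case: (d - k)%N => [|t] /= Hk.
    by move: Hk; rewrite S0 submx0 => /eqP ->; rewrite mul0mx sub0mx.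
  by apply: submx_trans (submxMr _ Hk) (S_N _ zh).
have iterK k (v : 'rV_r) :
    iter k (fun v => v *m N') v *m B = iter k (fun v => v *m N) (v *m B).
  elim: k => [|k IHk] //=; by rewrite -mulmxA HN' mulmxA IHk.
have nilN : forall v : 'rV_r, iter d (fun v => v *m N') v = 0.
  move=> v; apply: (row_free_inj Bfree); rewrite iterK mul0mx.
  apply/eqP; rewrite -submx0 -S0 -[X in S X](subnn d); apply: iterN.
  by rewrite -BU submxMl.
have := nil_trace nilN.
rewrite NK raddfB Zc raddfB /= mxtrace_mulC subrr.
rewrite mxtraceZ mxtrace1 add0r => /eqP; rewrite oppr_eq0 mulf_eq0 => /orP [/eqP //|].
move: Bfree => /eqP Br; rewrite -Br BU pnatr_eq0 mxrank_eq0 => /eqP U0.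
by move: wU w0; rewrite U0 submx0 => ->.
Qed.
End Krylov.

Lemma rho_sum m (a : 'I_m -> CC) (v : 'I_m -> g) : (forall i, v i \in p) ->
  rho (\sum_(i < m) a i *: v i) = \sum_(i < m) a i *: rho (v i).
Proof.
elim: m a v => [|m IH] a v Hv; first by rewrite !big_ord0 rho0.
rewrite !big_ord_recl rho_lin ?IH //.
by apply: memv_suml => i _; apply: memvZ.
Qed.

Hypothesis Hbr : is_lie_bracket br.

Lemma lie_thm m : forall k : {vspace g}, \dim k = m -> (k <= p)%VS ->
  lie_subalgebra br k -> lie_solvable br k ->
  forall W : 'M[CC]_n, W != 0 -> (forall x, x \in k -> (W *m rho x <= W)%MS) ->
  exists2 w : 'rV[CC]_n, w != 0 &
    (w <= W)%MS /\ forall x, x \in k -> exists c, w *m rho x = c *: w.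
Proof.
elim/ltn_ind: m => m IH k dk kp ksub ksolv W W0 Wst.
have kp' y : y \in k -> y \in p by move=> yk; apply: (subvP kp).
case: m IH dk => [|m] IH dk.
  move/eqP: dk; rewrite dimv_eq0 => /eqP k0.
  case/rowV0Pn: W0 => v vW v0; exists v => //; split => // x.
  by rewrite k0 memv0 => /eqP ->; exists 0; rewrite rho0 mulmx0 scale0r.
have Dk := derived_sub ksub.
have [x0 x0k x0D] : exists2 x0, x0 \in k & x0 \notin derived br k.
  apply/subvPn; apply: contraT; rewrite negbK => kD.
  have Ek : derived br k = k by apply/eqP; rewrite eqEsubv Dk kD.
  case: ksolv => j; have -> : iter j (derived br) k = k.
    by elim: j => //= j ->.
  by move=> k0; move: dk; rewrite k0 dimv0.
set D := (derived br k + <[x0]>)%VS.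
set hh := (derived br k + (k :\: D))%VS.
have hk : (hh <= k)%VS by rewrite subv_add Dk diffvSl.
have x0h : x0 \notin hh.
  apply/negP => /memv_addP [d1 d1D [e eh Ex]].
  have eD : e \in D.
    have -> : e = x0 - d1 by rewrite Ex addrC addKr.
    apply: memvB; first by apply: (subvP (addvSr _ _)); apply: memv_line.
    by apply: (subvP (addvSl _ _)).
  have : e \in ((k :\: D) :&: D)%VS by rewrite memv_cap eh eD.
  rewrite capv_diff memv0 => /eqP e0.
  by move: x0D; rewrite Ex e0 addr0 d1D.
have khx : (k <= hh + <[x0]>)%VS.
  rewrite /hh addvC addvA [(<[x0]> + _)%VS]addvC -/D addvC addv_diff.
  exact: addvSl.
have dh : (\dim hh < m.+1)%N.
  rewrite -dk; have := dimv_leqif_eq hk; rewrite ltn_neqAle => [[-> ->]].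
  by rewrite andbT; apply: contra x0h => /eqP ->.
have hsub : lie_subalgebra br hh.
  move=> a b ah bh; apply: (subvP (addvSl _ _)); apply: br_derived => //.
    exact: (subvP hk).
  exact: (subvP hk).
have hsolv : lie_solvable br hh by apply: solvable_sub ksolv.
have hp : (hh <= p)%VS by apply: subv_trans kp.
have [w0 w00 [w0W Hw0]] := IH _ dh hh erefl hp hsub hsolv W W0
   (fun x xh => Wst x (subvP hk x xh)).
set b := vbasis hh.
have bh (i : 'I_(\dim hh)) : b`_i \in hh by apply: vbasis_mem; apply: mem_nth; rewrite size_tuple.
have [lb Hlb] := @fin_all_exists _ (fun _ => CC) _ (fun i => Hw0 _ (bh i)).
set lam := fun y => \sum_(i < \dim hh) coord b i y * lb i.
set Wl := (W :&: \bigcap_(i < \dim hh) kermx (rho b`_i - (lb i)%:M))%MS.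
have memWl (v : 'rV_n) : (v <= Wl)%MS = (v <= W)%MS && [forall i : 'I_(\dim hh), v *m rho b`_i == lb i *: v].
  rewrite sub_capmx; congr (_ && _); apply/sub_bigcapmxP/forallP => H i.
    by have := H i isT; rewrite sub_kermx mulmxBr mul_mx_scalar subr_eq0.
  by move=> _; rewrite sub_kermx mulmxBr mul_mx_scalar subr_eq0; apply: H.
have lamP (v : 'rV_n) : (v <= Wl)%MS -> forall y, y \in hh -> v *m rho y = lam y *: v.
  rewrite memWl => /andP [_ /forallP Hv] y yh.
  rewrite {1}(coord_vbasis yh) rho_sum; last by move=> i; apply: (subvP hp).
  rewrite mulmx_sumr /lam scaler_suml; apply: eq_bigr => i _.
  by rewrite -scalemxAr (eqP (Hv i)) scalerA.
have w0l : (w0 <= Wl)%MS.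
  by rewrite memWl w0W; apply/forallP => i; rewrite Hlb.
have Wl0 : Wl != 0.
  by apply: contra w00; rewrite -submx0 => /eqP <-.
have x0p := kp' _ x0k.
have Wlx : (Wl *m rho x0 <= Wl)%MS.
  apply/row_subP => i; rewrite row_mul; set v := row i Wl.
  have vWl : (v <= Wl)%MS by apply: row_sub.
  have [->|v0] := eqVneq v 0; first by rewrite mul0mx sub0mx.
  rewrite memWl; move: (vWl); rewrite memWl => /andP [vW _].
  apply/andP; split; first by apply: submx_trans (Wst x0 x0k); apply: submxMr.
  apply/forallP => j.
  have hx y : y \in hh -> br y x0 \in hh.
    move=> yh; apply: (subvP (addvSl _ _)); apply: br_derived => //.
    exact: (subvP hk).
  have Z := weight_br hp x0p hx v0 (lamP v vWl) (bh j).
  have E := rho_br (subvP hp _ (bh j)) x0p.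
  have : v *m rho (br b`_j x0) = 0 by rewrite lamP // ?Z ?scale0r // hx.
  have Hvj : v *m rho b`_j = lb j *: v.
    by move: (vWl); rewrite memWl => /andP [_ /forallP /(_ j) /eqP].
  by rewrite E mulmxBr !mulmxA Hvj -scalemxAl => /eqP; rewrite subr_eq0.
have [w1 w10 [w1Wl [mu Hmu]]] := eigen_in Wl0 Wlx.
exists w1 => //; split.
  by apply: submx_trans w1Wl _; apply: capmxSl.
move=> y /(subvP khx) /memv_addP [y1 y1h [y2 /vlineP [a ->] ->]].
exists (a * mu + lam y1).
rewrite addrC rho_lin ?memvZ //; last exact: (subvP hp).
by rewrite mulmxDr -scalemxAr Hmu lamP // scalerA scalerDl.
Qed.
End Rep.

Section Lin.
Variables (U V : lmodType CC) (f : U -> V).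
Hypothesis flin : forall (a : CC) v w, f (a *: v + w) = a *: f v + f w.

Lemma flin0 : f 0 = 0.
Proof. have := flin 1 0 0; rewrite addr0 !scale1r; exact: idem0. Qed.

Lemma flin_sum m (c : 'I_m -> CC) (s : 'I_m -> U) :
  f (\sum_(i < m) c i *: s i) = \sum_(i < m) c i *: f (s i).
Proof.
elim: m c s => [|m IH] c s; first by rewrite !big_ord0 flin0.
by rewrite !big_ord_recl flin IH.
Qed.
End Lin.

Section Span.
Variable V : lmodType CC.
Implicit Types (s t : seq V) (v w : V).

Lemma span0 s : in_span s 0.
Proof. by exists (fun _ => 0); rewrite big1 // => i _; rewrite scale0r. Qed.

Lemma spanZD s (a : CC) v w : in_span s v -> in_span s w -> in_span s (a *: v + w).
Proof.
move=> [c ->] [d ->]; exists (fun i => a * c i + d i).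
rewrite scaler_sumr -big_split /=; apply: eq_bigr => i _.
by rewrite scalerDl scalerA.
Qed.

Lemma spanD s v w : in_span s v -> in_span s w -> in_span s (v + w).
Proof. by move=> ? ?; rewrite -[v]scale1r; apply: spanZD. Qed.

Lemma spanZ s (a : CC) v : in_span s v -> in_span s (a *: v).
Proof. by move=> ?; rewrite -[_ *: v]addr0; apply: spanZD => //; apply: span0. Qed.

Lemma spanB s v w : in_span s v -> in_span s w -> in_span s (v - w).
Proof. by move=> ? ?; rewrite -scaleN1r addrC; apply: spanZD. Qed.

Lemma span_nth s (i : 'I_(size s)) : in_span s s`_i.
Proof.
exists (fun j => (j == i)%:R); rewrite (bigD1 i) //= eqxx scale1r big1 ?addr0 //.
by move=> j /negbTE ->; rewrite scale0r.
Qed.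

Lemma span_mem s x : x \in s -> in_span s x.
Proof.
move=> xs; have xi : (index x s < size s)%N by rewrite index_mem.
by have := span_nth (Ordinal xi); rewrite /= nth_index.
Qed.

Lemma span_sum s m (a : 'I_m -> CC) (F : 'I_m -> V) :
  (forall i, in_span s (F i)) -> in_span s (\sum_(i < m) a i *: F i).
Proof.
elim: m a F => [|m IH] a F HF; first by rewrite big_ord0; apply: span0.
by rewrite big_ord_recl; apply: spanZD => //; apply: IH.
Qed.

Lemma span_map s t (f : V -> V) :
  (forall (a : CC) v w, f (a *: v + w) = a *: f v + f w) ->
  (forall x, x \in s -> in_span t (f x)) -> forall w, in_span s w -> in_span t (f w).
Proof.
move=> flin Hs w [c ->]; rewrite flin_sum //; apply: span_sum => i.
by apply: Hs; apply: mem_nth.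
Qed.

Lemma span_sub s t : (forall x, x \in s -> in_span t x) -> forall w, in_span s w -> in_span t w.
Proof. by move=> H; apply: (span_map (f := id)). Qed.

Definition frs s := forall c : 'I_(size s) -> CC, \sum_i c i *: s`_i = 0 -> forall i, c i = 0.

Lemma extract s : exists s', frs s' /\ forall w, in_span s w <-> in_span s' w.
Proof.
elim: s => [|a t [t' [ft' Ht']]].
  by exists [::]; split => // c _ [].
have sub_at : forall x, x \in t -> in_span (a :: t) x.
  by move=> x xt; apply: span_mem; rewrite inE xt orbT.
case: (classic (in_span t' a)) => Ha.
  exists t'; split => // w; split.
    apply: span_sub => x; rewrite inE => /orP [/eqP -> //|xt].
    by apply/Ht'; apply: span_mem.
  by move=> /Ht'; apply: span_sub.
exists (a :: t'); split.
  move=> c; rewrite big_ord_recl /= => Hc.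
  have c0 : c ord0 = 0.
    have [//|c0] := eqVneq (c ord0) 0; exfalso; apply: Ha.
    have -> : a = \sum_(i < size t') (- (c ord0)^-1 * c (lift ord0 i)) *: t'`_i.
      apply: (scalerI c0); rewrite scaler_sumr.
      move/eqP: Hc; rewrite addr_eq0 => /eqP ->; rewrite -sumrN.
      apply: eq_bigr => i _; rewrite add0n.
      by rewrite scalerA mulrA mulrN mulfV // mulN1r scaleNr.
    by apply: span_sum => i; apply: span_nth.
  move: Hc; rewrite c0 scale0r add0r => /ft' Hl i.
  by case: (unliftP ord0 i) => [j ->|->] //; apply: Hl.
move=> w; split.
  apply: span_sub => x; rewrite inE => /orP [/eqP ->|xt].
    by apply: span_mem; rewrite inE eqxx.
  move/Ht': (span_mem xt); apply: span_sub => y yt.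
  by apply: span_mem; rewrite inE yt orbT.
apply: span_sub => x; rewrite inE => /orP [/eqP ->|xt].
  by apply: span_mem; rewrite inE eqxx.
move/Ht': (span_mem xt); exact: span_sub.
Qed.

End Span.

Section Mod.
Variables (g : vectType CC) (br : g -> g -> g) (V : lmodType CC) (act : g -> V -> V).
Hypothesis Hmod : is_lie_module br act.

Lemma actr x : forall (a : CC) v w, act x (a *: v + w) = a *: act x v + act x w.
Proof. by case: Hmod. Qed.
Lemma actl v : forall (a : CC) x y, act (a *: x + y) v = a *: act x v + act y v.
Proof. by case: Hmod => H _ _ a x y; apply: H. Qed.
Lemma actbr x y v : act (br x y) v = act x (act y v) - act y (act x v).
Proof. by case: Hmod. Qed.

Lemma actl_sum m (a : 'I_m -> CC) (u : 'I_m -> g) v :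
  act (\sum_(i < m) a i *: u i) v = \sum_(i < m) a i *: act (u i) v.
Proof. exact: (flin_sum (f := fun x => act x v) (actl v)). Qed.

Section QW.
Variable p : {vspace g}.
Hypothesis Hpi : lie_ideal br p.
Variables (phi : g -> CC) (v : V).
Hypothesis Hv : forall x, x \in p -> act x v = phi x *: v.

Let bs : seq g := vbasis (fullv : {vspace g}).
Let L n := iter n (fun l => l ++ [seq act x w | x <- bs, w <- l]) [:: v].

Let C3 n w : in_span (L n) w -> in_span (L n.+1) w.
Proof. by apply: span_sub => x xL; apply: span_mem; rewrite /= mem_cat xL. Qed.

Let C2 n y w : in_span (L n) w -> in_span (L n.+1) (act y w).
Proof.
move=> Hw; rewrite (coord_vbasis (memvf y)) actl_sum; apply: span_sum => i.
apply: (span_map (actr _)) Hw => x xL; apply: span_mem.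
rewrite /= mem_cat; apply/orP; right; apply: allpairs_f => //.
by rewrite /bs; apply: mem_nth; rewrite size_tuple.
Qed.

Let C1 n x : x \in p -> forall u, u \in L n -> in_span (L n) (act x u).
Proof.
elim: n x => [|n IH] x xp u.
  by rewrite inE => /eqP ->; rewrite Hv //; apply: spanZ; apply: span_mem; rewrite inE.
rewrite /= mem_cat => /orP [uL|].
  by apply: C3; apply: IH.
case/allpairsP => [[b w] [/= bb wL ->]].
have -> : act x (act b w) = act b (act x w) - act (br b x) w.
  by rewrite actbr opprB addrC subrK.
apply: spanB; first by apply: C2; apply: IH.
by apply: C3; apply: IH => //; apply: Hpi.
Qed.

Let Cst n x w : x \in p -> in_span (L n) w -> in_span (L n) (act x w).
Proof. by move=> xp; apply: (span_map (actr _)) => u uL; apply: C1. Qed.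

Let Cmono m n w : (m <= n)%N -> in_span (L m) w -> in_span (L n) w.
Proof.
move=> /subnK <-; elim: (n - m)%N => [|k IH] // Hw.
by rewrite addSn; apply: C3; apply: IH.
Qed.

Lemma qw_lf : generates act v -> locally_finite act p.
Proof.
move=> Hgen.
have HS : submodule act (fun w => exists n, in_span (L n) w).
  split.
  - by exists 0%N; apply: span0.
  - move=> a w1 w2 [n1 H1] [n2 H2]; exists (maxn n1 n2).
    by apply: spanZD; [apply: Cmono H1; apply: leq_maxl | apply: Cmono H2; apply: leq_maxr].
  - by move=> x w [n Hn]; exists n.+1; apply: C2.
move=> w; have [n Hn] := Hgen _ HS (ex_intro _ 0%N (span_mem (mem_head v [::]))) w.
by exists (L n); split => // x w' xp; apply: Cst.
Qed.
End QW.
End Mod.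

Section Emb.
Variables (V : lmodType CC) (s : seq V).
Hypothesis fs : frs s.

Definition emb (c : 'rV[CC]_(size s)) : V := \sum_(i < size s) c 0 i *: s`_i.

Lemma emb_lin (a : CC) c d : emb (a *: c + d) = a *: emb c + emb d.
Proof.
rewrite /emb scaler_sumr -big_split /=; apply: eq_bigr => i _.
by rewrite !mxE scalerDl scalerA.
Qed.

Lemma emb0 : emb 0 = 0.
Proof. exact: flin0 emb_lin. Qed.

Lemma embB c d : emb (c - d) = emb c - emb d.
Proof.
have -> : c - d = (-1) *: d + c by rewrite scaleN1r addrC.
by rewrite emb_lin scaleN1r addrC.
Qed.

Lemma emb_inj : injective emb.
Proof.
move=> c d E; apply/matrixP => i j; rewrite ord1.
move/eqP: E; rewrite -subr_eq0 -embB => /eqP E.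
have H0 : \sum_i (c 0 i - d 0 i) *: s`_i = 0.
  by rewrite -[RHS]E /emb; apply: eq_bigr => k _; rewrite !mxE.
by have /eqP := fs H0 j; rewrite subr_eq0 => /eqP.
Qed.

Lemma span_emb w : in_span s w -> exists c, emb c = w.
Proof.
by move=> [c ->]; exists (\row_i c i); apply: eq_bigr => i _; rewrite mxE.
Qed.

Lemma emb_span c : in_span s (emb c).
Proof. by exists (fun i => c 0 i). Qed.
End Emb.

Theorem theorem2p5 (g : vectType CC) (br : g -> g -> g)
  (Hbr : is_lie_bracket br)
  (Hnss : ~ lie_semisimple br)
  (p : {vspace g}) (Hpi : lie_ideal br p) (Hps : lie_solvable br p)
  (Hpnp : ~ lie_perfect br p)
  (V : lmodType CC) (act : g -> V -> V)
  (Hmod : is_lie_module br act) (Hirr : irreducible_module act) :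
  locally_finite act p <-> quasi_whittaker br act p.
Proof.
split; last first.
  by move=> [phi [_ [v [Hv Hgen]]]]; apply: (qw_lf Hmod Hpi Hv Hgen).
move=> Hlf; case: Hirr => [[v0 v00] Hirr'].
have [s [vs sst]] := Hlf v0.
have [s' [fs' Hs']] := extract s.
have st' x w : x \in p -> in_span s' w -> in_span s' (act x w).
  by move=> xp /Hs' Hw; apply/Hs'; apply: sst.
have rows x : exists M : 'M[CC]_(size s'),
    x \in p -> forall i, emb (row i M) = act x s'`_i.
  case: (boolP (x \in p)) => xp; last by exists 0.
  have H (i : 'I_(size s')) : exists c : 'rV[CC]_(size s'), emb c = act x s'`_i.
    by apply: span_emb; apply: st' => //; apply: span_nth.
  have [u Hu] := fin_all_exists H.
  by exists (\matrix_(i < size s') u i) => _ i; rewrite rowK.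
pose rho x := proj1_sig (constructive_indefinite_description _ (rows x)).
have Hrho x : x \in p -> forall i, emb (row i (rho x)) = act x s'`_i.
  exact: (proj2_sig (constructive_indefinite_description _ (rows x))).
have key x c : x \in p -> emb (c *m rho x) = act x (emb c).
  move=> xp; rewrite mulmx_sum_row (flin_sum (@emb_lin _ s')).
  rewrite /emb (flin_sum (actr Hmod x)); apply: eq_bigr => i _.
  by rewrite -Hrho.
have rho_lin (a : CC) x y : x \in p -> y \in p -> rho (a *: x + y) = a *: rho x + rho y.
  move=> xp yp; apply/row_matrixP => i; apply: (emb_inj fs').
  rewrite Hrho ?memvD ?memvZ // rowE mulmxDr -scalemxAr -!rowE emb_lin !Hrho //.
  exact: (actl Hmod).
have rho_br x y : x \in p -> y \in p -> rho (br x y) = rho y *m rho x - rho x *m rho y.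
  move=> xp yp; apply/row_matrixP => i; apply: (emb_inj fs').
  have bp : br x y \in p by apply: Hpi.
  rewrite Hrho // rowE mulmxBr !mulmxA -!rowE embB !key // !Hrho //.
  exact: (actbr Hmod).
have n0 : (0 < size s')%N.
  have [c Hc] := proj1 (Hs' v0) vs; rewrite lt0n; apply: contra v00 => /eqP E.
  by rewrite Hc big1 // => i; have := ltn_ord i; rewrite {2}E.
have W0 : (1%:M : 'M[CC]_(size s')) != 0.
  by rewrite -mxrank_eq0 mxrank1; case: (size s') n0.
have psub : lie_subalgebra br p by move=> x y _ yp; apply: Hpi.
have [c c0 [_ Hc]] := lie_thm rho_lin rho_br Hbr erefl (subvv p) psub Hps W0
  (fun x _ => submx1 _).
set v := emb c.
have vnz : v != 0.
  by apply: contra c0 => /eqP; rewrite -(emb0 s') => /(emb_inj fs') ->.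
have ex x : exists a, x \in p -> act x v = a *: v.
  case: (boolP (x \in p)) => xp; last by exists 0.
  have [a Ha] := Hc x xp; exists a => _.
  by rewrite -key // Ha -[a *: c]addr0 emb_lin emb0 addr0.
pose phi x := proj1_sig (constructive_indefinite_description _ (ex x)).
have Hphi x : x \in p -> act x v = phi x *: v.
  exact: (proj2_sig (constructive_indefinite_description _ (ex x))).
have scI (a b : CC) : a *: v = b *: v -> a = b.
  move/eqP; rewrite -subr_eq0 -scalerBl scaler_eq0 (negbTE vnz) orbF subr_eq0.
  by move/eqP.
exists phi; split; last first.
  exists v; split => // S HS Sv w.
  case: (Hirr' S HS) => [H|H] //; exfalso.
  by move: vnz; rewrite (H v Sv) eqxx.
split.
  move=> a x y xp yp; apply: scI.
  by rewrite -Hphi ?memvD ?memvZ // (actl Hmod) !Hphi // scalerDl scalerA.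
move=> x xD; have xp : x \in p by apply: (subvP (derived_sub psub)).
apply: scI; rewrite -Hphi // scale0r.
move: xD; rewrite /derived; set S := [seq br _ _ | _ <- _, _ <- _] => xS.
rewrite (@coord_span _ _ _ (in_tuple S) x xS) (actl_sum Hmod) //.
apply: big1 => i _.
have : (in_tuple S)`_i \in S by apply: mem_nth; exact: ltn_ord.
case/allpairsP => [[a b] [/= ap bp ->]].
have ap' := vbasis_mem ap; have bp' := vbasis_mem bp.
have actZ y (k : CC) w : act y (k *: w) = k *: act y w.
  by rewrite -[k *: w]addr0 (actr Hmod) (flin0 (actr Hmod y)) addr0.
by rewrite (actbr Hmod) // !Hphi // !actZ !Hphi // !scalerA mulrC subrr scaler0.
Qed.
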